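(* Let $R$ be an associative ring (not necessarily unital) which is solvable in the sense below. If there is an associative ring $S$ with $[S,S]\cong R$, then $R$ is nilpotent, i.e. $R^m=0$ for some $m$ (all products of $m$ elements of $R$ vanish). In particular, a nonzero commutative ring with identity is not isomorphic to $[S,S]$ for any associative ring $S$.
   Context: For an associative ring $R$, $[R,R]$ denotes the two-sided ideal of $R$ generated by all Lie commutators $xy-yx$, $x,y\in R$. Define $\delta^{(0)}(R)=R$ and $\delta^{(n)}(R)$ to be the two-sided ideal of $R$ generated by all commutators $ab-ba$ with $a,b\in\delta^{(n-1)}(R)$. $R$ is called solvable (in the sense of Jennings) if $\delta^{(n)}(R)=0$ for some $n$. *)

(* Defs.v *)
From mathcomp Require Import all_boot all_algebra.
Set Implicit Arguments. Unset Strict Implicit. Unset Printing Implicit Defensive.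
Import GRing.Theory.
Local Open Scope ring_scope.

Record rng := Rng {
  rng_car :> zmodType;
  rmul : rng_car -> rng_car -> rng_car;
  rmulA : associative rmul;
  rmulDl : left_distributive rmul +%R;
  rmulDr : right_distributive rmul +%R }.

Section RngDefs.
Variable R : rng.

Definition is_ideal (I : R -> Prop) : Prop :=
  [/\ I 0, (forall x y, I x -> I y -> I (x - y)),
      (forall r x, I x -> I (rmul r x)) & (forall r x, I x -> I (rmul x r))].

Definition gen_ideal (X : R -> Prop) : R -> Prop :=
  fun z => forall I, is_ideal I -> (forall x, X x -> I x) -> I z.

Definition commutator (x y : R) : R := rmul x y - rmul y x.

Definition comm_ideal_of (A : R -> Prop) : R -> Prop :=
  gen_ideal (fun z => exists a b, [/\ A a, A b & z = commutator a b]).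

Definition comm_ideal : R -> Prop := comm_ideal_of (fun _ => True).

Fixpoint derived (n : nat) : R -> Prop :=
  match n with
  | 0 => fun _ => True
  | n'.+1 => comm_ideal_of (derived n')
  end.

Definition jsolvable : Prop := exists n, forall x, derived n x -> x = 0.

Definition rprod (x : R) (s : seq R) : R := foldl (@rmul R) x s.

Definition rnilpotent : Prop :=
  exists m, forall (x : R) (s : seq R), size s = m -> rprod x s = 0.

End RngDefs.

(* [S,S] (with the ring structure induced from S) is isomorphic to R:
   an injective ring homomorphism R -> S whose image is exactly [S,S]. *)
Definition iso_comm_ideal (R S : rng) : Prop :=
  exists f : R -> S,
    [/\ injective f,
        (forall x y, f (x + y) = f x + f y),
        (forall x y, f (rmul x y) = rmul (f x) (f y)) &
        (forall z, comm_ideal z <-> exists x, f x = z)].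

Definition rng_of (T : pzRingType) : rng :=
  @Rng T (@GRing.mul T) (@mulrA T) (@mulrDl T) (@mulrDr T).

(* Main.v *)
Require Import Defs.
From mathcomp Require Import all_boot all_algebra.
Set Implicit Arguments. Unset Strict Implicit. Unset Printing Implicit Defensive.
Import GRing.Theory.
Local Open Scope ring_scope.

Local Notation "x ** y" := (rmul x y) (at level 40, left associativity).

Lemma rmul0r (T : rng) (x : T) : 0 ** x = 0.
Proof. by apply: (addrI (0 ** x)); rewrite -rmulDl !addr0. Qed.
Lemma rmulr0 (T : rng) (x : T) : x ** 0 = 0.
Proof. by apply: (addrI (x ** 0)); rewrite -rmulDr !addr0. Qed.
Lemma rmulNl (T : rng) (a b : T) : (- a) ** b = - (a ** b).
Proof. by apply: (addrI (a ** b)); rewrite -rmulDl !subrr rmul0r. Qed.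
Lemma rmulNr (T : rng) (a b : T) : a ** (- b) = - (a ** b).
Proof. by apply: (addrI (a ** b)); rewrite -rmulDr !subrr rmulr0. Qed.
Lemma rmulBl (T : rng) (a b c : T) : (a - b) ** c = a ** c - b ** c.
Proof. by rewrite rmulDl rmulNl. Qed.
Lemma rmulBr (T : rng) (a b c : T) : c ** (a - b) = c ** a - c ** b.
Proof. by rewrite rmulDr rmulNr. Qed.

Lemma idealN (T : rng) (I : T -> Prop) x : is_ideal I -> I x -> I (- x).
Proof. by case=> H0 Hs _ _ Hx; rewrite -sub0r; apply: Hs. Qed.
Lemma idealD (T : rng) (I : T -> Prop) x y : is_ideal I -> I x -> I y -> I (x + y).
Proof.
move=> HI Hx Hy; case: (HI) => _ Hs _ _.
by have := Hs _ _ Hx (idealN HI Hy); rewrite opprK.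
Qed.
Lemma ideal0 (T : rng) (I : T -> Prop) : is_ideal I -> I 0.
Proof. by case. Qed.
Lemma idealB (T : rng) (I : T -> Prop) x y : is_ideal I -> I x -> I y -> I (x - y).
Proof. by case=> _ Hs _ _; apply: Hs. Qed.
Lemma idealMl (T : rng) (I : T -> Prop) r x : is_ideal I -> I x -> I (r ** x).
Proof. by case=> _ _ Hl _; apply: Hl. Qed.
Lemma idealMr (T : rng) (I : T -> Prop) r x : is_ideal I -> I x -> I (x ** r).
Proof. by case=> _ _ _ Hr; apply: Hr. Qed.

Lemma gen_ideal_ideal (T : rng) (X : T -> Prop) : is_ideal (gen_ideal X).
Proof.
split.
- by move=> I HI _; apply: ideal0.
- by move=> x y Hx Hy I HI HX; apply: idealB => //; [apply: Hx | apply: Hy].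
- by move=> r x Hx I HI HX; apply: idealMl => //; apply: Hx.
- by move=> r x Hx I HI HX; apply: idealMr => //; apply: Hx.
Qed.
Lemma gen_ideal_sub (T : rng) (X : T -> Prop) x : X x -> gen_ideal X x.
Proof. by move=> Hx I _ HX; apply: HX. Qed.

Section Dummy. End Dummy.
Lemma N_trans (T : rng) (N : T -> Prop) a b c : is_ideal N ->
  N (a - b) -> N (b - c) -> N (a - c).
Proof.
move=> HN H1 H2; have := idealD HN H1 H2.
by rewrite addrA subrK.
Qed.
Lemma N_sym (T : rng) (N : T -> Prop) a b : is_ideal N -> N (a - b) -> N (b - a).
Proof. by move=> HN H; have := idealN HN H; rewrite opprB. Qed.
Lemma N_mulr (T : rng) (N : T -> Prop) a b s : is_ideal N -> N (a - b) -> N (a ** s - b ** s).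
Proof. by move=> HN H; rewrite -rmulBl; apply: idealMr. Qed.
Lemma N_mull (T : rng) (N : T -> Prop) a b s : is_ideal N -> N (a - b) -> N (s ** a - s ** b).
Proof. by move=> HN H; rewrite -rmulBr; apply: idealMl. Qed.
Lemma N_of (T : rng) (N : T -> Prop) a b : is_ideal N -> N (a - b) -> N b -> N a.
Proof. by move=> HN H1 H2; have := idealD HN H1 H2; rewrite subrK. Qed.

Lemma core (S : rng) (Dk J : S -> Prop) :
  (forall u, J u -> Dk u) ->
  (forall u s, J u -> J (u ** s)) ->
  (forall u s, J u -> J (s ** u)) ->
  forall u v, J u -> J v -> forall z, comm_ideal z ->
  comm_ideal_of Dk (u ** (v ** z)).
Proof.
move=> JD Jr Jl u v Ju Jv.
set N := comm_ideal_of Dk.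
have HN : is_ideal N by apply: gen_ideal_ideal.
have F1 : forall p q, J p -> J q -> N (p ** q - q ** p).
  move=> p q Hp Hq; apply: gen_ideal_sub; exists p, q; split => //; exact: JD.
have C : forall u v s, J u -> J v -> N (u ** v ** s - s ** (u ** v)).
  move=> u' v' s Hu Hv.
  have e1 := F1 _ _ Hu (Jr _ s Hv).
  have e2 := F1 _ _ Hv (Jl _ s Hu).
  rewrite !rmulA in e1 e2 *.
  exact: (N_trans HN e1 e2).
set Q := fun z => N (u ** (v ** z)).
have HQ : is_ideal Q.
  split; rewrite /Q.
  - by rewrite !rmulr0; apply: ideal0.
  - by move=> x y Hx Hy; rewrite !rmulBr; apply: (idealB HN).
  - move=> s x Hx; rewrite !rmulA.
    apply: (N_of HN (b := s ** (u ** v) ** x)).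
      by apply: (N_mulr _ HN); apply: C.
    by rewrite -!rmulA; apply: (idealMl _ HN).
  - by move=> s x Hx; rewrite !rmulA; apply: (idealMr _ HN); rewrite -!rmulA.
move=> z Hz; suff : Q z by [].
apply: (Hz Q HQ) => _ [a [b [_ _ ->]]].
rewrite /Q /commutator rmulBr rmulBr !rmulA.
have e4 : N (u ** v ** a ** b - a ** (u ** v) ** b) by apply: (N_mulr _ HN); apply: C.
have e3 : N (a ** (u ** v) ** b - a ** (v ** u) ** b).
  apply: (N_mulr _ HN); apply: (N_mull _ HN); apply: (N_sym HN); exact: F1.
have e2 : N (a ** (v ** u) ** b - u ** a ** v ** b).
  apply: (N_sym HN); have := N_mulr b HN (F1 _ _ Ju (Jl _ a Jv)).
  by rewrite !rmulA.
have e1 : N (u ** a ** v ** b - v ** b ** u ** a).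
  by have := F1 _ _ (Jr _ a Ju) (Jr _ b Jv); rewrite !rmulA.
have e5 : N (v ** b ** u ** a - b ** u ** v ** a).
  by have := N_mulr a HN (F1 _ _ Jv (Jl _ b Ju)); rewrite !rmulA.
have e6 : N (b ** u ** v ** a - u ** v ** b ** a).
  apply: (N_sym HN); have := N_mulr a HN (C _ _ b Ju Jv).
  by rewrite !rmulA.
apply: (N_trans HN e4); apply: (N_trans HN e3); apply: (N_trans HN e2).
apply: (N_trans HN e1); apply: (N_trans HN e5); exact: e6.
Qed.

Fixpoint Jp (S : rng) (n : nat) : S -> Prop :=
  match n with
  | 0 => @comm_ideal S
  | n'.+1 => fun z => exists a b, [/\ Jp n' a, @comm_ideal S b & z = a ** b]
  end.

Lemma comm_ideal_ideal (S : rng) : is_ideal (@comm_ideal S).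
Proof. exact: gen_ideal_ideal. Qed.

Lemma Jp_mulr (S : rng) n (a s : S) : Jp n a -> Jp n (a ** s).
Proof.
case: n => [|n] /=; first exact: (idealMr _ (comm_ideal_ideal S)).
move=> [x [y [Hx Hy ->]]]; exists x, (y ** s); split => //; last by rewrite rmulA.
exact: (idealMr _ (comm_ideal_ideal S)).
Qed.

Lemma Jp_mull (S : rng) n (a s : S) : Jp n a -> Jp n (s ** a).
Proof.
elim: n a => [|n IH] a /=; first exact: (idealMl _ (comm_ideal_ideal S)).
move=> [x [y [Hx Hy ->]]]; exists (s ** x), y; split => //; last by rewrite rmulA.
exact: IH.
Qed.

Lemma Jp_comm (S : rng) n (a : S) : Jp n a -> comm_ideal a.
Proof.
case: n => [|n] //= [x [y [_ Hy ->]]].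
exact: (idealMl _ (comm_ideal_ideal S)).
Qed.

Lemma Jp_split (S : rng) p q (z : S) : Jp (p + q).+1 z ->
  exists a b, [/\ Jp p a, Jp q b & z = a ** b].
Proof.
elim: q z => [|q IH] z.
  by rewrite addn0 /= => -[a [b [Ha Hb ->]]]; exists a, b.
rewrite addnS /= => -[y [c [Hy Hc ->]]].
have [a [b [Ha Hb ->]]] := IH _ Hy.
exists a, (b ** c); split => //; last by rewrite rmulA.
by exists b, c.
Qed.

Section Dummy2. End Dummy2.

Lemma main_part1 (R S : rng) (f : R -> S) :
  injective f ->
  (forall x y, f (x + y) = f x + f y) ->
  (forall x y, f (rmul x y) = rmul (f x) (f y)) ->
  (forall z, comm_ideal z <-> exists x, f x = z) ->
  forall k, exists m, forall z, Jp m z -> exists r, @derived R k r /\ f r = z.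
Proof.
move=> finj fadd fmul fim.
have f0 : f 0 = 0 by apply: (addrI (f 0)); rewrite -fadd !addr0.
have fN : forall x, f (- x) = - f x.
  by move=> x; apply: (addrI (f x)); rewrite -fadd !subrr f0.
have fB : forall x y, f (x - y) = f x - f y by move=> x y; rewrite fadd fN.
elim=> [|k [m IH]].
  exists 0%N => z /= /fim [r <-]; by exists r.
set Dk := fun z => exists r, @derived R k r /\ f r = z.
have HD : is_ideal (@derived R k.+1) by apply: gen_ideal_ideal.
have Q : forall n, comm_ideal_of Dk n -> forall j j', Jp m j -> Jp m j' ->
    exists r, @derived R k.+1 r /\ f r = j ** n ** j'.
  move=> n Hn.
  pose Q := fun n => forall j j', Jp m j -> Jp m j' ->
    exists r, @derived R k.+1 r /\ f r = j ** n ** j'.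
  suff : Q n by [].
  apply: Hn.
  - split; rewrite /Q.
    + move=> j j' _ _; exists 0; split; first exact: (ideal0 HD).
      by rewrite f0 rmulr0 rmul0r.
    + move=> x y Hx Hy j j' Hj Hj'.
      have [r1 [H1 E1]] := Hx _ _ Hj Hj'.
      have [r2 [H2 E2]] := Hy _ _ Hj Hj'.
      exists (r1 - r2); split; first exact: (idealB HD).
      by rewrite fB E1 E2 rmulBr rmulBl.
    + move=> s x Hx j j' Hj Hj'.
      have := Hx _ _ (Jp_mulr s Hj) Hj'; by rewrite !rmulA.
    + move=> s x Hx j j' Hj Hj'.
      have := Hx _ _ Hj (Jp_mull s Hj'); by rewrite !rmulA.
  - move=> _ [p [q [[d1 [Hd1 <-]] [d2 [Hd2 <-]] ->]]] j j' Hj Hj'.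
    have [rj Ej] := (fim j).1 (Jp_comm Hj).
    have [rj' Ej'] := (fim j').1 (Jp_comm Hj').
    exists (rj ** commutator d1 d2 ** rj'); split.
      apply: (idealMr _ HD); apply: (idealMl _ HD).
      by apply: gen_ideal_sub; exists d1, d2.
    by rewrite /commutator !fmul fB !fmul Ej Ej'.
have JD : forall u, Jp m u -> Dk u by move=> u /IH.
exists (m + ((m + m.+1).+1 + m).+1).+1 => z.
move=> /Jp_split [x1 [y [H1 Hy ->]]].
move: Hy => /Jp_split [w [x4 [Hw H4 ->]]].
move: Hw => /Jp_split [x2 [y3 [H2 [x3 [c [H3 Hc ->]]]]]].
have Hn := core JD (@Jp_mulr S m) (@Jp_mull S m) H2 H3 Hc.
have [r [Hr Er]] := Q _ Hn _ _ H1 H4.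
exists r; split => //; rewrite Er p; exact: (esym (rmulA _ _ _)).
Qed.

Lemma rprod_Jp (R S : rng) (f : R -> S) :
  (forall x y, f (rmul x y) = rmul (f x) (f y)) ->
  (forall z, comm_ideal z <-> exists x, f x = z) ->
  forall s x n, Jp n (f x) -> Jp (n + size s) (f (rprod x s)).
Proof.
move=> fmul fim; elim=> [|a s IH] x n Hx /=; first by rewrite addn0.
rewrite -addSnnS; apply: IH => /=.
exists (f x), (f a); split => //; first by apply/fim; exists a.
Qed.

Theorem proposition5p4 :
  (forall R : rng, jsolvable R ->
     forall S : rng, iso_comm_ideal R S -> rnilpotent R)
  /\
  (forall T : comNzRingType, forall S : rng, ~ iso_comm_ideal (rng_of T) S).
Proof.
have P1 : forall R : rng, jsolvable R ->
     forall S : rng, iso_comm_ideal R S -> rnilpotent R.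
  move=> R [n Hn] S [f [finj fadd fmul fim]].
  have [m Hm] := main_part1 finj fadd fmul fim n.
  have f0 : f 0 = 0 by apply: (addrI (f 0)); rewrite -fadd !addr0.
  exists m => x s Hs.
  have Hx : Jp 0 (f x) by apply/fim; exists x.
  have := rprod_Jp fmul fim s Hx; rewrite add0n Hs => /Hm [r [Hr Er]].
  by apply: finj; rewrite -Er (Hn _ Hr) f0.
split => // T S Hiso.
have Hs : jsolvable (rng_of T).
  exists 1%N => x Hx.
  have HI : is_ideal (fun y : rng_of T => y = 0).
    split => //.
    - by move=> a b -> ->; rewrite subrr.
    - by move=> r a ->; apply: rmulr0.
    - by move=> r a ->; apply: rmul0r.
  apply: (Hx _ HI) => _ [a [b [_ _ ->]]].
  by rewrite /commutator /= mulrC subrr.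
have [m Hm] := P1 _ Hs _ Hiso.
have : rprod (1 : rng_of T) (nseq m 1) = 1.
  rewrite /rprod; elim: m {Hm} => //= m IH.
  by rewrite mulr1.
by rewrite Hm ?size_nseq // => /eqP; rewrite eq_sym oner_eq0.
Qed.
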